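(* Let $\eta^{(\varepsilon)}(t)$, $\varepsilon\in(0,1]$, be semi-Markov processes on $\mathbb{X}=\{1,\dots,N\}$ built from Markov renewal processes as in the context, satisfying condition A of the context and conditions B and C of the context for some $\varepsilon_0\in(0,1]$. Fix $r\in\mathbb{X}$, assume $\mathsf P\{\eta^{(\varepsilon)}_0=r\}=0$, and let $_r\eta^{(\varepsilon)}(t)$ be the reduced semi-Markov process on $_r\mathbb{X}=\mathbb{X}\setminus\{r\}$ with transition probabilities $_rQ^{(\varepsilon)}_{ij}(t)$ and expectations $_re_{ij}(\varepsilon)=\int_0^\infty t\,{}_rQ^{(\varepsilon)}_{ij}(dt)$. Then conditions B and C hold for $_r\eta^{(\varepsilon)}(t)$: $_rQ^{(\varepsilon)}_{ij}(0)=0$ and $_re_{ij}(\varepsilon)<\infty$ for all $i,j\in{}_r\mathbb{X}$, $\varepsilon\in(0,\varepsilon_0]$.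
   Context: For $\varepsilon\in(0,1]$, $(\eta^{(\varepsilon)}_n,\kappa^{(\varepsilon)}_n)$, $n\ge0$, is a homogeneous Markov chain on $\mathbb{X}\times[0,\infty)$, $\kappa^{(\varepsilon)}_0=0$, with transition probabilities $Q^{(\varepsilon)}_{ij}(t)=\mathsf P\{\eta^{(\varepsilon)}_1=j,\kappa^{(\varepsilon)}_1\le t\mid\eta^{(\varepsilon)}_0=i,\kappa^{(\varepsilon)}_0=s\}$ not depending on $s$; $p_{ij}(\varepsilon)=Q^{(\varepsilon)}_{ij}(\infty)$; $e_{ij}(\varepsilon)=\int_0^\infty t\,Q^{(\varepsilon)}_{ij}(dt)$; the semi-Markov process is $\eta^{(\varepsilon)}(t)=\eta^{(\varepsilon)}_{\nu^{(\varepsilon)}(t)}$, $\nu^{(\varepsilon)}(t)=\max\{n\ge0:\kappa^{(\varepsilon)}_1+\dots+\kappa^{(\varepsilon)}_n\le t\}$. Condition A: there exist $\mathbb{Y}_i\subseteq\mathbb{X}$ and $\varepsilon_0\in(0,1]$ such that for $\varepsilon\in(0,\varepsilon_0]$: $p_{ij}(\varepsilon)>0$ for $j\in\mathbb{Y}_i$, $p_{ij}(\varepsilon)=0$ for $j\notin\mathbb{Y}_i$, and for every $i,j$ there exist $n\ge1$, $i=l_0,\dots,l_n=j$ with $l_{k+1}\in\mathbb{Y}_{l_k}$. Condition B: $Q^{(\varepsilon)}_{ij}(0)=0$ for all $i,j$, $\varepsilon\in(0,\varepsilon_0]$. Condition C: $e_{ij}(\varepsilon)<\infty$ for all $i,j$,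 $\varepsilon\in(0,\varepsilon_0]$. Reduced process: $_r\xi_0=0$, $_r\xi_n=\min\{k>{}_r\xi_{n-1}:\eta^{(\varepsilon)}_k\in{}_r\mathbb{X}\}$, $_r\eta^{(\varepsilon)}_n=\eta^{(\varepsilon)}_{_r\xi_n}$, $_r\kappa^{(\varepsilon)}_0=0$, $_r\kappa^{(\varepsilon)}_n=\sum_{k={}_r\xi_{n-1}+1}^{_r\xi_n}\kappa^{(\varepsilon)}_k$; this is a Markov renewal process on $_r\mathbb{X}\times[0,\infty)$ with transition probabilities $_rQ^{(\varepsilon)}_{ij}(t)=\mathsf P\{{}_r\eta^{(\varepsilon)}_1=j,{}_r\kappa^{(\varepsilon)}_1\le t\mid{}_r\eta^{(\varepsilon)}_0=i\}$, and $_r\eta^{(\varepsilon)}(t)$ is its semi-Markov process. *)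

(* Defs.v *)
From HB Require Import structures.
From mathcomp Require Import all_boot all_order all_algebra.
From mathcomp Require Import all_classical all_reals all_analysis.
Set Implicit Arguments. Unset Strict Implicit. Unset Printing Implicit Defensive.
Import Order.TTheory GRing.Theory Num.Theory.
Local Open Scope classical_set_scope.
Local Open Scope ring_scope.

Section Defs.
Variable R : realType.
Variable N : nat.

(* A semi-Markov kernel on X = 'I_N: Q i j is the measure Q_ij(dt) on R
   (Q_ij(t) = Q i j `]-oo, t]`), concentrated on [0,+oo), with
   sum_j p_ij = 1 where p_ij = Q i j setT. *)
Definition semi_markov_kernel (Q : 'I_N -> 'I_N -> {measure set R -> \bar R}) : Prop :=
  (forall i j, Q i j `]-oo, 0[%classic = 0%E) /\
  (forall i, (\sum_(j < N) Q i j setT = 1)%E).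

Definition MRP_started (d : measure_display) (T : measurableType d)
  (P : probability T R) (Q : 'I_N -> 'I_N -> {measure set R -> \bar R})
  (i : 'I_N) (eta : nat -> T -> 'I_N) (kappa : nat -> T -> R) : Prop :=
  [/\ (forall n j, measurable (eta n @^-1` [set j])),
      (forall n, measurable_fun setT (kappa n)),
      (forall w, kappa 0%N w = 0),
      (forall n w, 0 <= kappa n w) &
      (forall (n : nat) (l : nat -> 'I_N) (A : nat -> set R),
          l 0%N = i -> (forall k, measurable (A k)) ->
          P [set w | eta 0%N w = i /\
                     forall k, (0 < k <= n)%N -> eta k w = l k /\ A k (kappa k w)]
          = (\prod_(1 <= k < n.+1) Q (l k.-1) (l k) (A k))%E)].

(* The reduced (r-excluded) embedded process: rxi_1 = min{k > 0 : eta_k != r}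
   (0 encodes "no such k"), reta_1 = eta_(rxi_1), rkappa_1 = kappa_1 + ... + kappa_(rxi_1). *)
Definition first_exit (T : Type) (eta : nat -> T -> 'I_N) (r : 'I_N) (w : T) (n : nat) : Prop :=
  (0 < n)%N /\ eta n w <> r /\ forall k, (0 < k < n)%N -> eta k w = r.

Definition red_xi1 (T : Type) (eta : nat -> T -> 'I_N) (r : 'I_N) (w : T) : nat :=
  xget 0%N (first_exit eta r w).

Definition red_eta1 (T : Type) (eta : nat -> T -> 'I_N) (r : 'I_N) (w : T) : 'I_N :=
  eta (red_xi1 eta r w) w.

Definition red_kappa1 (T : Type) (eta : nat -> T -> 'I_N) (kappa : nat -> T -> R)
  (r : 'I_N) (w : T) : R :=
  \sum_(1 <= k < (red_xi1 eta r w).+1) kappa k w.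

Definition red_event (T : Type) (eta : nat -> T -> 'I_N) (r j : 'I_N) : set T :=
  [set w | (0 < red_xi1 eta r w)%N /\ red_eta1 eta r w = j].

Definition red_Q (d : measure_display) (T : measurableType d) (P : probability T R)
  (eta : nat -> T -> 'I_N) (kappa : nat -> T -> R) (r j : 'I_N) (A : set R) : \bar R :=
  P (red_event eta r j `&` [set w | A (red_kappa1 eta kappa r w)]).

(* re_ij = int t rQ_ij(dt) = E_i[ rkappa_1 ; reta_1 = j ] *)
Definition red_e (d : measure_display) (T : measurableType d) (P : probability T R)
  (eta : nat -> T -> 'I_N) (kappa : nat -> T -> R) (r j : 'I_N) : \bar R :=
  (\int[P]_(w in red_event eta r j) (red_kappa1 eta kappa r w)%:E)%E.

End Defs.

(* Main.v *)
Require Import Defs.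
From HB Require Import structures.
From mathcomp Require Import all_boot all_order all_algebra.
From mathcomp Require Import all_classical all_reals all_analysis.
From mathcomp Require Import measurable_realfun.
Import Order.TTheory GRing.Theory Num.Theory.
Local Open Scope classical_set_scope.
Local Open Scope ring_scope.
Lemma ge0_le_integralT_nm d (T : measurableType d) (R : realType)
  (mu : {measure set T -> \bar R}) (f g : T -> \bar R) :
  (forall x, 0 <= f x)%E -> (forall x, f x <= g x)%E ->
  (\int[mu]_x f x <= \int[mu]_x g x)%E.
Proof.
move=> f0 fg; have g0 x : (0 <= g x)%E by apply: le_trans (fg x).
rewrite !ge0_integralTE//.
apply: le_ereal_sup => _ [h hf <-]; exists h => //= x; exact: le_trans (hf x) (fg x).
Qed.

Definition cyl {N : nat} {T : Type} (eta : nat -> T -> 'I_N) (i : 'I_N)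
  (L : nat -> 'I_N) (k : nat) : set T :=
  [set w | eta 0%N w = i /\ forall m, (0 < m <= k)%N -> eta m w = L m].

Lemma cyl_meas d (T : measurableType d) N (eta : nat -> T -> 'I_N) i L k :
  (forall n j, measurable (eta n @^-1` [set j])) -> measurable (cyl eta i L k).
Proof.
move=> me.
have -> : cyl eta i L k = eta 0%N @^-1` [set i] `&`
    \bigcap_m (if (0 < m <= k)%N then eta m @^-1` [set L m] else setT).
  apply/seteqP; split => w /=.
  - by move=> [e0 em]; split => // m _; case: ifP => // /em.
  - by move=> [e0 em]; split => // m hm; have := em m I; rewrite hm.
apply: measurableI => //; apply: bigcapT_measurable => m; case: ifP => // _.
Qed.

Lemma first_exit_meas d (T : measurableType d) N (eta : nat -> T -> 'I_N) r n :
  (forall n j, measurable (eta n @^-1` [set j])) ->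
  measurable [set w | first_exit eta r w n].
Proof.
move=> me.
have -> : [set w | first_exit eta r w n] = [set w | (0 < n)%N] `&`
    (~` (eta n @^-1` [set r])) `&`
    \bigcap_m (if (0 < m < n)%N then eta m @^-1` [set r] else setT).
  apply/seteqP; split => w /=.
  - by move=> [n0 [en em]]; split; [split|] => // m _; case: ifP => // /em.
  - by move=> [[n0 en] em]; split => //; split => // m hm; have := em m I; rewrite hm.
apply: measurableI; first apply: measurableI.
- case: (0 < n)%N; [rewrite (_ : [set _ | _] = setT) //|rewrite (_ : [set _ | _] = set0) //];
    by apply/seteqP; split.
- exact: measurableC.
- by apply: bigcapT_measurable => m; case: ifP => // _.
Qed.
From mathcomp Require Import zify ring lra.
Lemma mrp_eta0 d (T : measurableType d) (R : realType) N (P : probability T R)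
  (Qe : 'I_N -> 'I_N -> {measure set R -> \bar R}) i eta kappa :
  MRP_started P Qe i eta kappa -> P.-negligible [set w | eta 0%N w <> i].
Proof.
case=> me _ _ _ hf.
have := hf 0%N (fun _ => i) (fun _ => setT) erefl (fun _ => measurableT).
rewrite big_geq// (_ : [set w | _] = eta 0%N @^-1` [set i]); last first.
  apply/seteqP; split => w /=; first by case.
  by move=> e0; split => // k /andP[k0 k0']; lia.
move=> h1; exists (~` (eta 0%N @^-1` [set i])); split.
- exact: measurableC.
- by rewrite probability_setC// h1 subee.
- by move=> w /= h.
Qed.

Lemma mrp_cyl d (T : measurableType d) (R : realType) N (P : probability T R)
  (Qe : 'I_N -> 'I_N -> {measure set R -> \bar R}) i eta kappa k L A :
  MRP_started P Qe i eta kappa -> (0 < k)%N -> L 0%N = i -> measurable A ->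
  P (cyl eta i L k `&` kappa k @^-1` A) =
  (\prod_(1 <= m < k) Qe (L m.-1) (L m) setT * Qe (L k.-1) (L k) A)%E.
Proof.
case=> me mk k0' kge hf k0 L0 mA.
have := hf k L (fun m => if m == k then A else setT) L0
  (fun m => if m == k as b return measurable (if b then A else setT) then mA else measurableT).
rewrite big_nat_recr//= eqxx.
rewrite (@eq_big_nat _ _ _ 1 k _ (fun m => Qe (L m.-1) (L m) setT)); last first.
  by move=> m /andP[_ mk']; rewrite ltn_eqF.
move=> <-; congr (P _); apply/seteqP; split => w /=.
- move=> [[e0 em] hA]; split => // m hm; split; first exact: em.
  by case: eqP => [->//|_].
- move=> [e0 em]; split; first by split => // m hm; exact: (em m hm).1.
  by have := (em k _).2; rewrite eqxx; apply; rewrite k0 leqnn.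
Qed.
Arguments mrp_cyl {d T R N P Qe i eta kappa k L A}.
Arguments mrp_eta0 {d T R N P Qe i eta kappa}.
Lemma mrp_cyl_int d (T : measurableType d) (R : realType) N (P : probability T R)
  (Qe : 'I_N -> 'I_N -> {measure set R -> \bar R}) i eta kappa k L :
  MRP_started P Qe i eta kappa -> (0 < k)%N -> L 0%N = i ->
  (forall a b, Qe a b setT \is a fin_num) ->
  (\int[P]_(w in cyl eta i L k) (kappa k w)%:E =
   (\prod_(1 <= m < k) fine (Qe (L m.-1) (L m) setT))%:E *
   \int[Qe (L k.-1) (L k)]_(t in `[0%R, +oo[%classic) t%:E)%E.
Proof.
move=> H k0 L0 hfin.
have [me mk _ kge _] := H.
set G := cyl eta i L k.
have mG : measurable G by exact: cyl_meas.
pose phi := (kappa k \* \1_G) \+ (\1_G \- cst 1).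
have mphi : measurable_fun setT phi.
  apply: measurable_funD; first by apply: measurable_funM => //; exact: measurable_indic.
  by apply: measurable_funB => //; exact: measurable_indic.
have phiG w : w \in G -> phi w = kappa k w.
  by move=> wG; rewrite /phi /= indicE wG mulr1 subrr addr0.
have phinG w : w \notin G -> phi w = -1.
  by move=> wG; rewrite /phi /= indicE (negbTE wG) mulr0 add0r sub0r.
have pre : phi @^-1` `[0%R, +oo[%classic = G.
  apply/seteqP; split => w /=.
  - rewrite in_itv /= andbT; case: (boolP (w \in G)) => [/set_mem //|/phinG ->].
    by rewrite leNgt ltrN10.
  - by move=> wG; rewrite in_itv /= andbT phiG ?mem_set// kge.
have c0 : 0 <= \prod_(1 <= m < k) fine (Qe (L m.-1) (L m) setT).
  by apply: prodr_ge0 => m _; apply: fine_ge0; exact: measure_ge0.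
transitivity (\int[P]_(w in phi @^-1` `[0%R, +oo[%classic) ((fun y => y%:E) \o phi) w)%E.
  by rewrite pre; apply: eq_integral => w wG /=; rewrite phiG.
rewrite -(ge0_integral_pushforward mphi)//; last 2 first.
  by exact: EFin_measurable.
  by move=> y /[!inE]; rewrite /= in_itv /= andbT lee_fin.
rewrite (eq_measure_integral (mscale (NngNum c0) (Qe (L k.-1) (L k))) (f := fun y : R => y%:E)); last first.
  move=> A mA AD.
  transitivity (P (phi @^-1` A)); first by [].
  transitivity (((\prod_(1 <= m < k) fine (Qe (L m.-1) (L m) setT))%:E * Qe (L k.-1) (L k) A)%E); last by [].
  have -> : phi @^-1` A = G `&` kappa k @^-1` A.
    apply/seteqP; split => w /=.
    - move=> hA; have := AD _ hA; rewrite /= in_itv /= andbT.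
      case: (boolP (w \in G)) => [wG _|/phinG ->]; last by rewrite leNgt ltrN10.
      by split; [exact: set_mem|rewrite -phiG].
    - by move=> [wG hA]; rewrite phiG ?mem_set.
  rewrite (mrp_cyl H)// -prodEFin; congr (_ * _)%E.
  by apply: eq_bigr => m _; rewrite fineK.
by rewrite ge0_integral_mscale//= => y; rewrite /= in_itv /= andbT lee_fin.
Qed.
Arguments mrp_cyl_int {d T R N P Qe i eta kappa k L}.
Lemma xi_spec (T : Type) N (eta : nat -> T -> 'I_N) r w :
  (0 < red_xi1 eta r w)%N -> first_exit eta r w (red_xi1 eta r w).
Proof.
rewrite /red_xi1 => h; apply: xgetPex.
case: (pselect (exists n, first_exit eta r w n)) => // hN.
by move: h; rewrite xgetPN ?ltnn// => n hn; apply: hN; exists n.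
Qed.

Lemma xi_uniq (T : Type) N (eta : nat -> T -> 'I_N) r w n :
  first_exit eta r w n -> red_xi1 eta r w = n.
Proof.
move=> hn; rewrite /red_xi1; apply: (@xget_unique _ 0%N (first_exit eta r w) n hn) => x hx.
move: hn hx => [n0 [en hn]] [x0 [ex hx]].
case: (ltngtP x n) => // [xn|nx].

- by exfalso; apply: ex; apply: hn; rewrite x0 xn.
- by exfalso; apply: en; apply: hx; rewrite n0 nx.
Qed.

Arguments xi_uniq {T N eta r w n}.
Arguments xi_spec {T N eta r w}.

Lemma part1 d (T : measurableType d) (R : realType) N (P : probability T R)
  (Qe : 'I_N -> 'I_N -> {measure set R -> \bar R}) i eta kappa r j :
  MRP_started P Qe i eta kappa ->
  (forall a b, Qe a b `]-oo, 0]%classic = 0%E) ->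
  red_Q P eta kappa r j `]-oo, 0]%classic = 0%E.
Proof.
move=> H hB; have [me mk k0 kge hf] := H.
rewrite /red_Q.
set S := (X in P X).
pose sk n := fun w => \sum_(1 <= k < n.+1) kappa k w.
have eS : S = \bigcup_n ([set w | first_exit eta r w n] `&` eta n @^-1` [set j]
    `&` (sk n @^-1` `]-oo, 0]%classic)).
  apply/seteqP; split => w.
  - move=> [[x0 ej] hk]; exists (red_xi1 eta r w) => //.
    by split; [split; [exact: xi_spec|]|].
  - move=> [n _ [[fe ej] hk]]; have xn := xi_uniq fe.
    rewrite /S /red_event /red_eta1 /red_kappa1 /= xn.
    by split; [split => //; case: fe|].
have mS : measurable S.
  rewrite eS; apply: bigcupT_measurable => n.
  apply: measurableI; first apply: measurableI.
  - exact: first_exit_meas.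
  - exact: me.
  - rewrite -[X in measurable X]setTI.
    exact: (measurable_sum (index_iota 1 n.+1) (fun k => mk k) measurableT (measurable_itv `]-oo, 0])).
apply: measure_negligible => //.
apply: (@negligibleS _ _ _ P ([set w | eta 0%N w <> i] `|` \bigcup_n
  [set w | eta 0%N w = i /\ nat_of_ord (eta 1%N w) = n /\ kappa 1%N w <= 0])).
- move=> w [[x0 ej] hk].
  case: (pselect (eta 0%N w = i)) => e0; [right|left] => //.
  exists (nat_of_ord (eta 1%N w)) => //; split => //; split => //.
  move: hk; rewrite /= /red_kappa1 in_itv /= (big_ltn (m := 1%N)) ?ltnS//.
  apply: le_trans; rewrite lerDl; apply: sumr_ge0 => k _; exact: kge.
- apply: negligibleU; first exact: mrp_eta0 H.
  apply: negligible_bigcup => n.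
  have [nN|nN] := ltnP n N; last first.
    exists set0; split => // w [_ [en _]].
    by move: (ltn_ord (eta 1%N w)); rewrite en ltnNge nN.
  pose l := Ordinal nN.
  pose L := fun m : nat => if m == 0%N then i else l.
  exists (cyl eta i L 1 `&` kappa 1%N @^-1` (`]-oo, 0]%classic : set R)); split.
  + apply: measurableI; first exact: cyl_meas.
    rewrite -[X in measurable X]setTI; apply: mk => //; exact: measurable_itv.
  + apply: (eq_trans (mrp_cyl H _ _ _)) => //=.
    by rewrite big_geq// mul1e hB.
  + move=> w [e0 [en hk]]; split; first split => // m /andP[m0 m1].
      have -> : m = 1%N by lia.
      by rewrite /L /=; apply: val_inj.
    by rewrite /= in_itv /=.
Qed.
Arguments part1 {d T R N P Qe i eta kappa r j}.
Lemma part2 d (T : measurableType d) (R : realType) N (P : probability T R)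
  (Qe : 'I_N -> 'I_N -> {measure set R -> \bar R}) i eta kappa r j :
  MRP_started P Qe i eta kappa ->
  (forall a b, Qe a b setT \is a fin_num) ->
  (forall a b, (Qe a b setT <= 1)%E) ->
  (fine (Qe r r setT) < 1)%R ->
  (forall a b, (\int[Qe a b]_(t in `[0%R, +oo[%classic) t%:E < +oo)%E) ->
  (red_e P eta kappa r j < +oo)%E.
Proof.
move=> H hfin hle1 hpr hC.
have [me mk k0 kge hf] := H.
set pr := fine (Qe r r setT).
have pr0 : 0 <= pr by apply: fine_ge0; exact: measure_ge0.
have fle1 a b : fine (Qe a b setT) <= 1 by rewrite -lee_fin fineK.
pose e a l := (\int[Qe a l]_(t in `[0%R, +oo[%classic) t%:E)%E.
have e0 a l : (0 <= e a l)%E.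
  by apply: integral_ge0 => t; rewrite /= in_itv /= andbT lee_fin.
pose M := (\sum_(l < N) (e i l + e r l))%E.
have M0 : (0 <= M)%E by apply: sume_ge0 => l _; rewrite adde_ge0.
have Mfin : M \is a fin_num.
  rewrite ge0_fin_numE//; apply: lte_sum_pinfty => l _; apply: lte_add_pinfty; exact: hC.
set Mr := fine M.
have Mr0 : 0 <= Mr by exact: fine_ge0.
pose q := (1 + pr) / 2.
have q0 : 0 < q by move: pr0; rewrite /q; lra.
have q1 : q < 1 by move: hpr; rewrite /q -/pr; lra.
have prq : pr <= q by move: hpr; rewrite /q -/pr; lra.
pose L := fun (k : nat) (l : 'I_N) (m : nat) =>
  if m == 0%N then i else if (m < k)%N then r else l.
pose G k l := cyl eta i (L k l) k.
have mG k l : measurable (G k l) by exact: cyl_meas.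
pose t k l := (fun w => (kappa k w)%:E) \_ (G k l).
have t0 k l w : (0 <= t k l w)%E.
  by rewrite /t patchE; case: ifP => // _; rewrite lee_fin.
have mt k l : measurable_fun setT (t k l).
  apply/(measurable_restrictT _ (mG k l)); apply/measurable_EFinP.
  exact: measurable_funS measurableT (subsetT _) (mk k).
pose F w := (\sum_(n <oo) \sum_(l < N) t n.+1 l w)%E.
pose B := [set w | eta 0%N w <> i].
have eB : B = ~` (eta 0%N @^-1` [set i]) by apply/seteqP; split.
have mB : measurable B by rewrite eB; exact: measurableC.
have PB : P B = 0%E by apply: measure_negligible => //; exact: mrp_eta0 H.
pose h := (cst (+oo%E : \bar R)) \_ B.
have h0 w : (0 <= h w)%E by rewrite /h patchE; case: ifP => _ /=; [exact: leey|exact: le_refl].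
have mh : measurable_fun setT h.
  by apply/(measurable_restrictT _ mB); exact: measurable_cst.
have F0 w : (0 <= F w)%E.
  by apply: nneseries_ge0 => n _ _; apply: sume_ge0 => l _.
have mF : measurable_fun setT F.
  apply: (@ge0_emeasurable_sum _ _ _ setT _ xpredT).
  - by move=> k x _ _; apply: sume_ge0 => l _.
  - by move=> k _; apply: emeasurable_sum => l; exact: mt.
have cb n l : \prod_(1 <= m < n.+1) fine (Qe (L n.+1 l m.-1) (L n.+1 l m) setT)
    <= pr ^+ n.-1.
  case: n => [|n]; first by rewrite big_geq// expr0.
  rewrite big_ltn// (@eq_big_nat _ _ _ 2 n.+2 _ (fun _ => pr)); last first.
    move=> m /andP[]; case: m => [|[|m]] // _ mn.
    by rewrite /L (ltnW mn) mn.
  rewrite prodr_const_nat subSS subSS subn0 /=.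
  by apply: ler_piMl; [exact: exprn_ge0|exact: fle1].
rewrite /red_e integral_mkcond.
apply: (le_lt_trans (@ge0_le_integralT_nm _ _ _ P _ (fun w => F w + h w) _ _)).
- move=> w; rewrite patchE; case: ifP => _ //; rewrite lee_fin.
  by apply: sumr_ge0 => k _; exact: kge.
- move=> w; rewrite patchE; case: ifPn => [/set_mem [x0 ej]|_]; last by rewrite adde_ge0.
  rewrite /h patchE; case: ifPn => [_|wB].
    rewrite /= addey ?leey //.
    by rewrite gt_eqF // (lt_le_trans (ltNyr 0) (F0 w)).
  have e0w : eta 0%N w = i.
    by apply: contrapT => hw; apply: (negP wB); rewrite inE.
  rewrite /= adde0 /F /red_kappa1.
  set x := red_xi1 eta r w.
  have fe : first_exit eta r w x := xi_spec x0.
  apply: (le_trans _ (nneseries_lim_ge x _)); last by move=> n _ _; apply: sume_ge0.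
  rewrite -sumEFin big_add1 /= big_nat_cond [X in (_ <= X)%E]big_nat_cond.
  apply: lee_sum => n /andP[/andP[_ nx] _].
  rewrite (bigD1 (eta n.+1 w)) //=.
  apply: (le_trans _ (leeDl _ _)); last by apply: sume_ge0.
  rewrite /t patchE mem_set //; split => // m /andP[m0 mn].
  rewrite /L (negbTE (lt0n_neq0 m0)).
  case: ifPn => [mlt|mge].
    by apply: fe.2.2; rewrite m0 (leq_trans mlt).
  have -> // : m = n.+1.
  by apply/eqP; rewrite eqn_leq mn leqNgt.
rewrite (ge0_integralD _ measurableT (fun x _ => F0 x) mF (fun x _ => h0 x) mh).
have -> : (\int[P]_x h x = 0)%E.
  rewrite /h -integral_mkcond integral_cst//.
  by transitivity ((+oo : \bar R) * 0)%E; [congr (_ * _)%E; exact: PB|exact: mule0].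
rewrite adde0 integral_nneseries//; last 2 first.
- by move=> n; apply: emeasurable_sum => l; exact: mt.
- by move=> n x _; apply: sume_ge0.
apply: (le_lt_trans (@lee_nneseries R _ (fun n => (Mr / q * q ^+ n)%:E) xpredT 0%N _ _)).
- by move=> n _ _; apply: integral_ge0 => x _; apply: sume_ge0.
- move=> n _.
  rewrite ge0_integral_sum; [|by []|by move=> l; exact: mt|by move=> l x _; exact: t0].
  apply: (le_trans (y := (\sum_(l < N) ((pr ^+ n.-1)%:E * (e i l + e r l)))%E)).
    apply: lee_sum => l _.
    rewrite -integral_mkcond (mrp_cyl_int H)//.
    apply: lee_pmul.
    + rewrite lee_fin; apply: prodr_ge0 => m _; apply: fine_ge0; exact: measure_ge0.
    + by apply: integral_ge0 => x; rewrite /= in_itv /= andbT lee_fin.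
    + by rewrite lee_fin; exact: cb.
    + have -> : L n.+1 l n.+1 = l by rewrite /L /= ltnn.
      case: n => [|n] /=.
      * by apply: leeDl; exact: e0.
      * have -> : L n.+2 l n.+1 = r by rewrite /L /= ltnSn.
        by apply: leeDr; exact: e0.
  rewrite -ge0_sume_distrr; last by move=> l _; rewrite adde_ge0.
  rewrite -/M -(fineK Mfin) -EFinM lee_fin -/Mr.
  rewrite (_ : Mr / q * q ^+ n = Mr * (q ^+ n / q)); last by rewrite -mulrA (mulrC q^-1).
  rewrite [pr ^+ _ * _]mulrC; apply: ler_wpM2l => //.
  apply: (le_trans (y := q ^+ n.-1)); first by apply: lerXn2r; rewrite // nnegrE ltW.
  case: n => [|n]; first by rewrite expr0 mul1r invf_ge1 // ltW.
  by rewrite /= exprS mulrC mulrA mulVf ?gt_eqF // mul1r.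
apply: (le_lt_trans (y := (Mr / q / (1 - q))%:E)); last exact: ltry.
apply: lime_le.
  apply: is_cvg_nneseries => n _ _; rewrite lee_fin; apply: mulr_ge0.
    by apply: divr_ge0 => //; exact: ltW.
  by apply: exprn_ge0; exact: ltW.
apply: nearW => m; rewrite sumEFin lee_fin.
apply: (geometric_le_lim m); [apply: divr_ge0 => //; exact: ltW|exact: q0|].
by rewrite ger0_norm // ltW.
Qed.
Arguments part2 {d T R N P Qe i eta kappa r j}.
Theorem lemma7 (R : realType) (N : nat)
  (Q : R -> 'I_N -> 'I_N -> {measure set R -> \bar R})
  (eps0 : R) (Y : 'I_N -> {set 'I_N}) (r : 'I_N) :
  (* semi-Markov kernels for every eps in (0,1] *)
  (forall eps, 0 < eps <= 1 -> semi_markov_kernel (Q eps)) ->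
  0 < eps0 <= 1 ->
  (* condition A *)
  (forall eps, 0 < eps <= eps0 -> forall i j,
      (j \in Y i -> (0 < Q eps i j setT)%E) /\ (j \notin Y i -> Q eps i j setT = 0%E)) ->
  (forall i j, exists (n : nat) (l : nat -> 'I_N),
      [/\ (0 < n)%N, l 0%N = i, l n = j & forall k, (k < n)%N -> l k.+1 \in Y (l k)]) ->
  (* condition B *)
  (forall eps, 0 < eps <= eps0 -> forall i j, Q eps i j `]-oo, 0]%classic = 0%E) ->
  (* condition C *)
  (forall eps, 0 < eps <= eps0 -> forall i j,
      (\int[Q eps i j]_(t in `[0%R, +oo[%classic) t%:E < +oo)%E) ->
  (* conclusion: conditions B and C for the reduced process on X \ {r} *)
  forall eps, 0 < eps <= eps0 -> forall i j, i != r -> j != r ->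
  forall (d : measure_display) (T : measurableType d) (P : probability T R)
         (eta : nat -> T -> 'I_N) (kappa : nat -> T -> R),
  MRP_started P (Q eps) i eta kappa ->
  red_Q P eta kappa r j `]-oo, 0]%classic = 0%E /\ (red_e P eta kappa r j < +oo)%E.
Proof.
move=> hsm heps0 hA hpath hB hC eps heps i j ir jr d T P eta kappa H.
have heps1 : 0 < eps <= 1.
  move/andP: heps => [e0 e1]; move/andP: heps0 => [_ e01].
  by rewrite e0 (le_trans e1 e01).
have [_ hsum] := hsm eps heps1.
have hle1 a b : (Q eps a b setT <= 1)%E.
  rewrite -(hsum a) (bigD1 b) //=; apply: leeDl; apply: sume_ge0 => l _.
  exact: measure_ge0.
have hfin a b : Q eps a b setT \is a fin_num.
  rewrite ge0_fin_numE ?measure_ge0 //; exact: (le_lt_trans (hle1 a b) (ltry 1)).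
split; first exact: (part1 H (hB eps heps)).
apply: (part2 H hfin hle1 _ (hC eps heps)).
have [l' [l'r pos]] : exists l', l' != r /\ (0 < Q eps r l' setT)%E.
  have [n [l [n0 l0 ln hY]]] := hpath r i.
  have : exists m, (m < n)%N /\ l m = r /\ l m.+1 != r.
    apply: contrapT => hno.
    have all_r k : (k <= n)%N -> l k = r.
      elim: k => [|k IH] kn; first by [].
      have lk := IH (ltnW kn).
      case: (eqVneq (l k.+1) r) => [->//|hne]; exfalso; apply: hno; exists k.
      by split.
    by move: ir; rewrite -ln all_r ?eqxx.
  move=> [m [mn [lm lm1]]]; exists (l m.+1); split => //.
  by apply: (hA eps heps r (l m.+1)).1; rewrite -lm; exact: hY.
have hs := hsum r.
rewrite (bigD1 r) //= (bigD1 l') //= in hs.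
have : (Q eps r r setT + Q eps r l' setT <= 1)%E.
  rewrite -hs addeA; apply: leeDl; apply: sume_ge0 => l _; exact: measure_ge0.
rewrite -(fineK (hfin r r)) -(fineK (hfin r l')) -EFinD lee_fin.
move: pos; rewrite -(fineK (hfin r l')) lte_fin.
lra.
Qed.
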